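(* Let $i\geq0$ and let $\tau$ be an SSRCT of shape $\alpha$ such that $\widetilde\alpha$ has an addable node in column $i+1$. Then $\Phi_{i+1}(\tau)$ has shape $\mathfrak{v}_{[i]}(\alpha)$.
   Context: Compositions are drawn as reverse composition diagrams (row $r$ from the top has $\alpha_r$ left-justified boxes); $\widetilde\alpha$ is the sorted partition. An SSRCT of shape $\alpha$: filling by positive integers with rows weakly decreasing left to right, first column strictly increasing top to bottom, and for rows $r<s$ and column $c$ with $(s,c+1)\in\alpha$, if $(r,c)\in\alpha$ and $\tau(r,c)\geq\tau(s,c+1)$ then $(r,c+1)\in\alpha$ and $\tau(r,c+1)>\tau(s,c+1)$. $\mathfrak{d}_j(\alpha)$ subtracts $1$ from the rightmost part equal to $j$ (omitting a resulting $0$); $\mathfrak{v}_{[i]}=\mathfrak{d}_1\mathfrak{d}_2\cdots\mathfrak{d}_i$ with $\mathfrak{d}_i$ applied first, and $\mathfrak{v}_{[0]}$ the identity. $\phi_{j+1}$ ($j\geq1$), for an SSRCT $\tau$ of shape $\alpha$ with a part equal to $j$ ($\tau(r,c)=0$ outside $\alpha$): $r_1$ is the largest index with $\alpha_{r_1}=j$; for $t\geq2$, $r_t$ is the largest $r<r_{t-1}$ with $\tau(r,j)>\tau(r_{t-1},j)\geq\tau(r,j+1)$, ending at $r_k$; $\phi_{j+1}(\tau)$ places, for $t=k,\ldots,2$, the original entry $\tau(r_{t-1},j)$ into box $(r_t,j)$ and deletes box $(r_1,j)$ (and its row if empty). $\Phi_1(\tau)=\tau$ and $\Phi_{i+1}(\tau)=\phi_2(\phi_3(\cdots\phi_{i+1}(\tau)\cdots))$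 for $i\geq1$. *)

(* Defs.v *)
From mathcomp Require Import all_boot.
Set Implicit Arguments. Unset Strict Implicit. Unset Printing Implicit Defensive.

(* Compositions: seq nat with positive parts; alpha_r = nth 0 alpha (r-1).
   Rows and columns are 1-indexed as in the paper.
   A filling is a seq of rows (row r = list of entries from left to right). *)

Definition composition (a : seq nat) : bool := all (fun x => 0 < x) a.

Definition sorted_part (a : seq nat) : seq nat := sort geq a.

Definition inbox (a : seq nat) (r c : nat) : bool :=
  (0 < r <= size a) && (0 < c <= nth 0 a r.-1).

(* addable node in column c of a partition lam: a box (r,c) not in lam
   whose addition gives a partition *)
Definition addable (lam : seq nat) (c : nat) : Prop :=
  exists r, [/\ 0 < r <= (size lam).+1, nth 0 lam r.-1 = c.-1
             & (r = 1 \/ c <= nth 0 lam r.-2)].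

(* entry tau(r,c), 0 outside *)
Definition entry (T : seq (seq nat)) (r c : nat) : nat :=
  if (r == 0) || (c == 0) then 0 else nth 0 (nth [::] T r.-1) c.-1.

Definition tab_shape (T : seq (seq nat)) : seq nat := map size T.

Definition is_SSRCT (T : seq (seq nat)) (a : seq nat) : Prop :=
  [/\ tab_shape T = a, composition a,
      (forall r c, inbox a r c -> 0 < entry T r c),
      (forall r c, 0 < c -> inbox a r c.+1 -> entry T r c.+1 <= entry T r c)
    & (forall r, 0 < r -> r < size a -> entry T r 1 < entry T r.+1 1)] /\
    (forall r s c, 0 < r -> r < s -> 0 < c -> inbox a s c.+1 ->
         inbox a r c -> entry T s c.+1 <= entry T r c ->
         inbox a r c.+1 /\ entry T s c.+1 < entry T r c.+1).

(* 1-indexed position of the rightmost part equal to j (assumes j \in a) *)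
Definition rightmost (j : nat) (a : seq nat) : nat := size a - index j (rev a).

(* d_j : subtract 1 from the rightmost part equal to j, omitting a 0;
   (identity if there is no such part: never used in that case) *)
Definition dj (j : nat) (a : seq nat) : seq nat :=
  if j \in a then
    let k := (rightmost j a).-1 in
    if j == 1 then take k a ++ drop k.+1 a else set_nth 0 a k j.-1
  else a.

(* v_[i] = d_1 d_2 ... d_i, d_i applied first *)
Fixpoint vv (i : nat) (a : seq nat) : seq nat :=
  match i with 0 => a | i'.+1 => vv i' (dj i a) end.

(* phi_{j+1}: the next row r_t from r_{t-1} *)
Definition next_row (T : seq (seq nat)) (j r' : nat) : option nat :=
  let cands := [seq r <- iota 1 r'.-1 |
                 (entry T r' j < entry T r j) && (entry T r (j.+1) <= entry T r' j)] in
  if cands is [::] then None else Some (last 0 cands).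

Fixpoint chain (T : seq (seq nat)) (j : nat) (fuel r' : nat) : seq nat :=
  match fuel with
  | 0 => [::]
  | f.+1 => match next_row T j r' with
            | Some r => r :: chain T j f r
            | None => [::]
            end
  end.

Definition phi_rows (T : seq (seq nat)) (j : nat) : seq nat :=
  let r1 := rightmost j (tab_shape T) in r1 :: chain T j (size T) r1.

Definition set_entry (T : seq (seq nat)) (r c v : nat) : seq (seq nat) :=
  set_nth [::] T r.-1 (set_nth 0 (nth [::] T r.-1) c.-1 v).

(* delete box (r,c) where c is the last box of row r; delete the row if empty *)
Definition del_box (T : seq (seq nat)) (r c : nat) : seq (seq nat) :=
  if c == 1 then take r.-1 T ++ drop r T
  else set_nth [::] T r.-1 (take c.-1 (nth [::] T r.-1)).

(* phi_{j+1}(T); None when the tab_shape has no part equal to j (undefined) *)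
Definition phi (j : nat) (T : seq (seq nat)) : option (seq (seq nat)) :=
  if (j == 0) || (j \notin tab_shape T) then None else
  let rs := phi_rows T j in
  let moved := foldl (fun U p => set_entry U p.1 j (entry T p.2 j))
                     T (zip (behead rs) rs) in
  Some (del_box moved (head 0 rs) j).

(* Phi i T = Phi_{i+1}(T) = phi_2 (phi_3 ( ... phi_{i+1} T)); Phi_1 = id *)
Fixpoint Phi (i : nat) (T : seq (seq nat)) : option (seq (seq nat)) :=
  match i with
  | 0 => Some T
  | i'.+1 => obind (Phi i') (phi i T)
  end.

(* Main.v *)
Require Import Defs.
From mathcomp Require Import all_boot.

Lemma map_set_nth' (A B : Type) (f : A -> B) x0 (s : seq A) n y :
  map f (set_nth x0 s n y) = set_nth (f x0) (map f s) n (f y).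
Proof.
elim: s n => [|x s IH] [|n] //=; last by rewrite IH.
by elim: n => [|n IHn] //=; rewrite IHn.
Qed.

Lemma set_nth_same (s : seq nat) n x0 : n < size s -> set_nth x0 s n (nth x0 s n) = s.
Proof. by elim: s n => [|x s IH] [|n] //= H; rewrite IH. Qed.

Lemma entry_pos T r j : 0 < entry T r j ->
  [/\ 0 < r, r.-1 < size T & j.-1 < size (nth [::] T r.-1)].
Proof.
rewrite /entry; case: r => [|r] //=; case: j => [|j] //= H.
have H1 : j < size (nth [::] T r).
  by rewrite ltnNge; apply/negP => Hs; move: H; rewrite nth_default.
split => //; rewrite ltnNge; apply/negP => Hs.
by move: H1; rewrite nth_default.
Qed.

Definition okrow (T : seq (seq nat)) j r := [&& 0 < r, r.-1 < size T & j.-1 < size (nth [::] T r.-1)].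

Lemma chain_ok T j f r' : all (okrow T j) (chain T j f r').
Proof.
elim: f r' => [|f IH] r' //=.
rewrite /next_row.
case E: [seq _ <- _ | _ ] => [|c cs] //=.
rewrite IH andbT.
have : last c cs \in [seq r <- iota 1 r'.-1 | (entry T r' j < entry T r j) &&
            (entry T r j.+1 <= entry T r' j)] by rewrite E mem_last.
rewrite mem_filter => /andP[/andP[H _] _].
have [a b c'] := @entry_pos T _ _ (leq_ltn_trans (leq0n _) H).
by rewrite /okrow a b c'.
Qed.

Lemma all_zip1 (P : pred nat) (xs ys : seq nat) :
  all P xs -> all (fun p => P p.1) (zip xs ys).
Proof.
by elim: xs ys => [|x xs IH] [|y ys] //= /andP[-> /IH ->].
Qed.

Lemma shape_set_entry U r j v : okrow U j r ->
  tab_shape (set_entry U r j v) = tab_shape U.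
Proof.
case/and3P => _ H1 H2.
rewrite /set_entry /tab_shape map_set_nth' /= size_set_nth.
rewrite (maxn_idPr H2) -(nth_map [::] 0 size H1) set_nth_same //.
by rewrite size_map.
Qed.

Lemma shape_fold T j U (ps : seq (nat * nat)) (g : nat * nat -> nat) :
  tab_shape U = tab_shape T -> all (fun p => okrow T j p.1) ps ->
  tab_shape (foldl (fun U p => set_entry U p.1 j (g p)) U ps) = tab_shape T.
Proof.
elim: ps U => [|p ps IH] U //= HU /andP[Hp Hps].
apply: IH Hps; rewrite shape_set_entry //.
move: Hp; rewrite /okrow => /and3P[a b c].
have Hs : size U = size T by rewrite -(size_map size U) -(size_map size T) /tab_shape in HU *; rewrite HU.
rewrite a /= Hs b /=.
  rewrite -(nth_map [::] 0 size) ?Hs // -/(tab_shape U) HU /tab_shape (nth_map [::] 0 size b) //.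
Qed.

Lemma rightmost_ok j s : j \in s ->
  0 < rightmost j s /\ nth 0 s (rightmost j s).-1 = j.
Proof.
move=> Hj; have Hi : index j (rev s) < size s by rewrite -size_rev index_mem mem_rev.
rewrite /rightmost subn_gt0 Hi; split => //.
have E := nth_rev 0 Hi; rewrite nth_index ?mem_rev // in E.
by rewrite -subnS -E.
Qed.

Lemma phi_shape j T : 0 < j -> j \in tab_shape T ->
  exists T', phi j T = Some T' /\ tab_shape T' = dj j (tab_shape T).
Proof.
move=> Hj0 Hj; rewrite /phi Hj orbF gtn_eqF //; eexists; split; first by [].
set rs := phi_rows T j.
set moved := foldl _ _ _.
have Hm : tab_shape moved = tab_shape T.
  apply: shape_fold => //; apply: all_zip1; exact: chain_ok.
have [Hr Hn] := rightmost_ok _ _ Hj.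
rewrite /dj Hj /del_box /= -/(tab_shape T).
case: eqP => [Ej|Hj1] /=.
  rewrite /tab_shape map_cat map_take map_drop -/(tab_shape moved) Hm.
  by change [seq size i | i <- T] with (tab_shape T); rewrite prednK.
rewrite /tab_shape.

rewrite map_set_nth' -/(tab_shape moved) Hm /= size_take.
have Hsz : size (nth [::] moved (rightmost j (tab_shape T)).-1) = j.
  have Hl : (rightmost j (tab_shape T)).-1 < size moved.
    rewrite -(size_map size) -/(tab_shape moved) Hm.
    by rewrite /rightmost prednK // leq_subr.
  by rewrite -(nth_map [::] 0 size Hl) -/(tab_shape moved) Hm.
by rewrite Hsz ltn_predL Hj0.
Qed.

Lemma Phi_shape i T : (i = 0 \/ i \in tab_shape T) ->
  exists T', Phi i T = Some T' /\ tab_shape T' = vv i (tab_shape T).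
Proof.
elim: i T => [|i IH] T H; first by exists T.
case: H => // H.
have [T1 [E1 S1]] := @phi_shape _ T (ltn0Sn i) H.
rewrite /= E1 /= -S1; apply: IH.
clear E1; case: i H S1 => [|i]; first by left.
move=> H S1; right; rewrite S1 /dj H /=.
have [Hr _] := rightmost_ok _ _ H.
apply/(nthP 0); exists (rightmost i.+2 (tab_shape T)).-1; last by rewrite nth_set_nth /= eqxx.
rewrite size_set_nth leq_max ltnSn //.
Qed.

Theorem corollary6p23 (i : nat) (a : seq nat) (T : seq (seq nat)) :
  is_SSRCT T a -> addable (sorted_part a) i.+1 ->
  exists T', Phi i T = Some T' /\ tab_shape T' = vv i a.
Proof.
move=> [[Ha _ _ _ _] _] [r [/andP[Hr0 Hr1] Hn _]].
rewrite -Ha; apply: Phi_shape.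
case: i Hn => [|i] /= Hn; first by left.
right; rewrite Ha -(mem_sort geq) -/(sorted_part a) -Hn.
apply: mem_nth; rewrite ltnNge; apply/negP => Hs.
by move: Hn; rewrite nth_default.
Qed.
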